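(* In the setting and Algorithm 1 described in the context, for every iteration $k\in\{1,\dots,T\}$, every realization of the random choices in iterations $1,\dots,k-1$, and every $i\in[n]$, letting $y^{(i)}_k$ denote the value of $y_k$ obtained when coordinate $i$ is selected in iteration $k$, we have $$f_\mu(x_k)-f_\mu(y^{(i)}_k)\geq\frac12\langle\nabla f_\mu(x_k),\,x_k-y^{(i)}_k\rangle.$$
   Context: Setting: $A\in\mathbb{R}^{m\times n}_{\geq 0}$ has every column nonzero; $\|A_{:i}\|_\infty$ is the largest entry of column $i$. Let $\epsilon\in(0,1)$, $\mu=\frac{\epsilon}{4\log(nm/\epsilon)}$, $L=4/\mu$, $f_\mu(x)=\vec 1^Tx+\mu\sum_{j=1}^m\exp(\frac1\mu(1-(Ax)_j))$, $\Delta=\{x: 0\leq x_i\leq 3/\|A_{:i}\|_\infty\ \forall i\}$, and for $x,y\in\mathbb{R}^n$ let $V_x(y)=\frac12\sum_i\|A_{:i}\|_\infty(x_i-y_i)^2$. Algorithm 1 (input $A$, a starting point $x^{\mathrm{start}}\in\Delta$, $f_\mu$, $\epsilon$): set $\tau=\frac{1}{8nL}$, $T=\lceil 8nL\log(1/\epsilon)\rceil$, $x_0=y_0=z_0=x^{\mathrm{start}}$, $\alpha_0=\frac1{nL}$. For $k=1,\dots,T$: $\alpha_k=\alpha_{k-1}/(1-\tau)$; $x_k=\tau z_{k-1}+(1-\tau)y_{k-1}$; choose $i\in[n]$ uniformly at random; let $\xi_k^{(i)}$ be $\nabla_i f_\mu(x_k)$ truncated to $[-1,1]$; set $z_k=\arg\min_{z\in\Delta}\{V_{z_{k-1}}(z)+n\alpha_k\xi^{(i)}_k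 z_i\}$ (i.e. $z_k$ equals $z_{k-1}$ except its $i$-th coordinate is $z_{k-1,i}-n\alpha_k\xi^{(i)}_k/\|A_{:i}\|_\infty$ projected onto $[0,3/\|A_{:i}\|_\infty]$); set $y_k=x_k+\frac{1}{n\alpha_kL}(z_k-z_{k-1})$. Output $y_T$. *)

(* Defs.v *)
From mathcomp Require Import all_boot all_order all_algebra.
From mathcomp Require Import all_classical all_reals all_analysis.
Set Implicit Arguments. Unset Strict Implicit. Unset Printing Implicit Defensive.
Import Order.TTheory GRing.Theory Num.Theory.
Local Open Scope ring_scope.

Section Alg.
Variables (R : realType) (m n : nat).

Definition colmax (A : 'M[R]_(m, n)) (i : 'I_n) : R := \big[Num.max/0]_(j < m) A j i.

Definition Ax (A : 'M[R]_(m, n)) (x : 'rV[R]_n) (j : 'I_m) : R :=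
  \sum_(i < n) A j i * x 0 i.

Definition mu_of (eps : R) : R := eps / (4 * ln ((n * m)%:R / eps)).
Definition L_of (eps : R) : R := 4 / mu_of eps.

Definition f_mu (A : 'M[R]_(m, n)) (eps : R) (x : 'rV[R]_n) : R :=
  \sum_(i < n) x 0 i + mu_of eps * \sum_(j < m) expR ((1 - Ax A x j) / mu_of eps).

Definition e_vec (i : 'I_n) : 'rV[R]_n := \row_(k < n) (if k == i then 1 else 0).

Definition partial (f : 'rV[R]_n -> R) (i : 'I_n) (x : 'rV[R]_n) : R :=
  derive1 (fun t : R => f (x + t *: e_vec i)) 0.

Definition inner (u v : 'rV[R]_n) : R := \sum_(i < n) u 0 i * v 0 i.
Definition grad (f : 'rV[R]_n -> R) (x : 'rV[R]_n) : 'rV[R]_n :=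
  \row_(i < n) partial f i x.

Definition in_Delta (A : 'M[R]_(m, n)) (x : 'rV[R]_n) : Prop :=
  forall i, 0 <= x 0 i <= 3 / colmax A i.

Definition tau_of (eps : R) : R := 1 / (8 * n%:R * L_of eps).
Definition T_of (eps : R) : int := Num.ceil (8 * n%:R * L_of eps * ln (1 / eps)).
Definition alpha_of (eps : R) (k : nat) : R :=
  (1 / (n%:R * L_of eps)) / (1 - tau_of eps) ^+ k.

Definition clamp (lo hi x : R) : R := Num.max lo (Num.min hi x).

(* One iteration k of Algorithm 1 from state (y_{k-1}, z_{k-1}) with selected
   coordinate i.  Returns (x_k, y_k, z_k). *)
Definition step (A : 'M[R]_(m, n)) (eps : R) (k : nat) (yz : 'rV[R]_n * 'rV[R]_n)
    (i : 'I_n) : 'rV[R]_n * 'rV[R]_n * 'rV[R]_n :=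
  let tau := tau_of eps in
  let a := alpha_of eps k in
  let y := yz.1 in let z := yz.2 in
  let x := tau *: z + (1 - tau) *: y in
  let xi := clamp (-1) 1 (partial (f_mu A eps) i x) in
  let z' := \row_(l < n) (if l == i then
                 clamp 0 (3 / colmax A i) (z 0 i - n%:R * a * xi / colmax A i)
               else z 0 l) in
  let y' := x + (1 / (n%:R * a * L_of eps)) *: (z' - z) in
  (x, y', z').

(* State (y_k, z_k) after k iterations, with random choices s 1, ..., s k. *)
Fixpoint state (A : 'M[R]_(m, n)) (eps : R) (xs : 'rV[R]_n) (s : nat -> 'I_n)
    (k : nat) : 'rV[R]_n * 'rV[R]_n :=
  match k with
  | 0 => (xs, xs)
  | k'.+1 => let r := step A eps k'.+1 (state A eps xs s k') (s k'.+1) in (r.1.2, r.2)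
  end.

End Alg.

(* Main.v *)
Require Import Defs.
From mathcomp Require Import all_boot all_order all_algebra.
From mathcomp Require Import all_classical all_reals all_analysis.
From mathcomp Require Import ring lra.
Import Order.TTheory GRing.Theory Num.Theory.
Local Open Scope ring_scope.

Section S.
Variables (R : realType) (m n : nat).
Implicit Types (A : 'M[R]_(m, n)) (x : 'rV[R]_n).
Lemma sum_e x i t : \sum_l (x + t *: e_vec R i) 0 l = \sum_l x 0 l + t.
Proof.
  under eq_bigr do rewrite !mxE.
  rewrite big_split /=; congr (_ + _).
  rewrite (bigD1 i) //= eqxx mulr1 big1 ?addr0 // => l /negbTE ->; by rewrite mulr0.
Qed.
Lemma Ax_e A x i t j : Ax A (x + t *: e_vec R i) j = Ax A x j + A j i * t.
Proof.
rewrite /Ax.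
under eq_bigr do rewrite !mxE mulrDr.
rewrite big_split /=; congr (_ + _).
rewrite (bigD1 i) //= eqxx mulr1 big1 ?addr0 // => l /negbTE ->; by rewrite mulr0 mulr0.
Qed.
Lemma g_eq A eps x i t :
  f_mu A eps (x + t *: e_vec R i) = \sum_l x 0 l + t + mu_of m n eps * \sum_j expR ((1 - Ax A x j - A j i * t) / mu_of m n eps).
Proof.
rewrite /f_mu sum_e; do 2 f_equal.
by apply: eq_bigr => j _; rewrite Ax_e opprD addrA.
Qed.
Lemma partial_eq A eps x i : mu_of m n eps != 0 ->
  partial (f_mu A eps) i x = 1 - \sum_j A j i * expR ((1 - Ax A x j) / mu_of m n eps).
Proof.
move=> mu0; set mu := mu_of m n eps.
rewrite /partial.
set h := fun (j : 'I_m) (t : R) => expR ((1 - Ax A x j - A j i * t) / mu).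
have -> : (fun t => f_mu A eps (x + t *: e_vec R i)) =
   cst (\sum_l x 0 l) + id + mu *: \sum_j h j.
  apply/funext => t; rewrite g_eq fct_sumE /=.
  by [].
have hd : forall j, is_derive (0:R) 1 (h j) (expR ((1 - Ax A x j) / mu) * (- A j i / mu)).
  move=> j.
  have hg : is_derive (0:R) 1 (fun t => (1 - Ax A x j - A j i * t) / mu) (- A j i / mu).
    have -> : (fun t => (1 - Ax A x j - A j i * t) / mu) =
        cst ((1 - Ax A x j) / mu) + (- A j i / mu) *: id.
      apply/funext => t; rewrite !fctE !mulrBl /=; change ((- A j i / mu) *: t) with ((- A j i / mu) * t); ring.
    have hh : is_derive (0:R) 1 (cst ((1 - Ax A x j) / mu) + (- A j i / mu) *: id) (0 + (- A j i / mu) *: (1:R)).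
      exact: is_deriveD.
    apply: (is_derive_eq hh).
    by rewrite add0r /GRing.scale /= mulr1.
  have := @is_derive1_comp R expR _ 0 _ _ _ hg.
  rewrite /h /comp mulr0 subr0. apply.
have hall : is_derive (0:R) 1 (cst (\sum_l x 0 l) + id + mu *: \sum_j h j)
   (0 + 1 + mu *: \sum_j (expR ((1 - Ax A x j) / mu) * (- A j i / mu))).
  apply: is_deriveD.
rewrite derive1E (@derive_val _ _ _ _ _ _ _ hall) add0r /GRing.scale /=; congr (_ + _).
rewrite mulr_sumr -sumrN; apply: eq_bigr => j _.
by field.
Qed.
Lemma expR_inv (u : R) : u < 1 -> expR u * (1 - u) <= 1.
Proof.
move=> hu; have h := expR_ge1Dx (- u).
have e : expR u * expR (- u) = 1 by rewrite -expRD subrr expR0.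
rewrite -[X in _ <= X]e ler_pM2l ?expR_gt0 //; lra.
Qed.
Lemma expR_le_neg (u : R) : u <= 0 -> expR u <= 1 + u + 1 * u ^+ 2.
Proof.
move=> hu; have h := expR_inv u (le_lt_trans hu ltr01).
have h1 : 0 < 1 - u by lra.
rewrite -(ler_pM2r h1); apply: (le_trans h).
have : 0 <= - u ^+ 3 by rewrite exprS oppr_ge0 mulr_le0_ge0 // sqr_ge0.
rewrite mul1r; nra.
Qed.
Lemma expR_le_pos (u : R) : 0 <= u -> u <= 1/4 -> expR u <= 1 + u + 4/3 * u ^+ 2.
Proof.
move=> hu0 hu; have h4 : (1/4:R) < 1 by lra.
have h := expR_inv u (le_lt_trans hu h4).
have h1 : 0 < 1 - u by lra.
rewrite -(ler_pM2r h1); apply: (le_trans h).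
have : 0 <= u ^+ 2 * (1 - 4 * u) by apply: mulr_ge0; [exact: sqr_ge0| lra].
nra.
Qed.
Lemma term (mu P w d M K : R) : 0 < mu -> 0 < P -> 0 <= w -> 0 <= K ->
  w * `|d| / mu <= M ->
  expR (w * d / mu) <= 1 + w * d / mu + K * (w * d / mu) ^+ 2 ->
  mu * (P * expR (w * d / mu)) <= mu * P + w * P * d + K * `|d| * M * w * P.
Proof.
move=> hmu hP hw hK hM he.
have hmuP : 0 < mu * P by apply: mulr_gt0.
apply: (le_trans (y := mu * P * (1 + w * d / mu + K * (w * d / mu) ^+ 2))).
  by rewrite mulrA ler_pM2l.
have e1 : (w * d / mu) ^+ 2 = (w * `|d| / mu) ^+ 2.
  by rewrite !exprMn real_normK // num_real.
rewrite e1.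
have hu0 : 0 <= w * `|d| / mu by apply: divr_ge0; [apply: mulr_ge0 | apply: ltW].
have e2 : mu * P * (1 + w * d / mu + K * (w * `|d| / mu) ^+ 2) =
  mu * P + w * P * d + K * P * (w * `|d|) * (w * `|d| / mu).
  by field; rewrite gt_eqF.
rewrite e2 -!addrA lerD2l lerD2l.
have : w * `|d| * (w * `|d| / mu) <= w * `|d| * M.
  by apply: ler_wpM2l => //; apply: mulr_ge0.
have hKP : 0 <= K * P by apply: mulr_ge0 => //; apply: ltW.
move=> h; have := ler_wpM2l hKP h.
move=> h'.
have e3 : K * P * (w * `|d|) * (w * `|d| / mu) = K * P * (w * `|d| * (w * `|d| / mu)) by ring.
rewrite e3; have -> : K * `|d| * M * w * P = K * P * (w * `|d| * M) by ring.
exact: h'.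
Qed.
Lemma sc1 (S th q : R) : 0 <= S <= 1 -> 0 <= th <= 1 -> 0 <= q ->
  1/2 * ((1 - S) * (th * clamp (-1) 1 (1 - S) * q)) <=
    (th * clamp (-1) 1 (1 - S) * q) - S * (th * clamp (-1) 1 (1 - S) * q)
    - 4/3 * `|th * clamp (-1) 1 (1 - S) * q| * (`|clamp (-1) 1 (1 - S)| / 4) * S.
Proof.
move=> /andP[hS0 hS1] /andP[ht0 ht1] hq.
have -> : clamp (-1) 1 (1 - S) = 1 - S by rewrite /clamp min_r ?max_r //; lra.
have hd0 : 0 <= th * (1 - S) * q by apply: mulr_ge0 => //; apply: mulr_ge0 => //; lra.
rewrite (ger0_norm hd0) (ger0_norm (_ : 0 <= 1 - S)); last by lra.
have hY : 0 <= th * q * (1 - S) ^+ 2 by apply: mulr_ge0; [exact: mulr_ge0|exact: sqr_ge0].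
nra.
Qed.
Lemma sc2 (S th q : R) : 1 < S -> 0 <= th <= 1 -> 0 <= q ->
  1/2 * ((1 - S) * (th * clamp (-1) 1 (1 - S) * q)) <=
    (th * clamp (-1) 1 (1 - S) * q) - S * (th * clamp (-1) 1 (1 - S) * q)
    - 1 * `|th * clamp (-1) 1 (1 - S) * q| * (`|clamp (-1) 1 (1 - S)| / 4) * S.
Proof.
move=> hS /andP[ht0 ht1] hq.
have htq : 0 <= th * q by exact: mulr_ge0.
case: (lerP S 2) => hS2.
  have -> : clamp (-1) 1 (1 - S) = 1 - S by rewrite /clamp min_r ?max_r //; lra.
  have hd0 : th * (1 - S) * q <= 0.
    rewrite -mulrA mulrCA; apply: mulr_le0_ge0; [lra| exact: mulr_ge0].
  rewrite (ler0_norm hd0) (ler0_norm (_ : 1 - S <= 0)); last by lra.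
  have hY : 0 <= th * q * (1 - S) ^+ 2 by apply: mulr_ge0; [exact: mulr_ge0|exact: sqr_ge0].
  nra.
have -> : clamp (-1) 1 (1 - S) = -1 by rewrite /clamp min_r ?max_l //; lra.
rewrite mulrN1 mulNr normrN ger0_norm // normrN normr1; nra.
Qed.
Lemma key A eps x i (c th q : R) :
  0 < mu_of m n eps -> 0 < c -> (forall j, 0 <= A j i <= c) -> 0 <= th <= 1 -> 0 <= q ->
  4 * (c * q) <= mu_of m n eps ->
  1/2 * (partial (f_mu A eps) i x * (th * clamp (-1) 1 (partial (f_mu A eps) i x) * q))
  <= f_mu A eps x - f_mu A eps (x - (th * clamp (-1) 1 (partial (f_mu A eps) i x) * q) *: e_vec R i).
Proof.
move=> hmu hc hA hth hq hcq.
have mu0 : mu_of m n eps != 0 by rewrite gt_eqF.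
rewrite partial_eq //.
set mu := mu_of m n eps.
set p := fun j => expR ((1 - Ax A x j) / mu).
set S := \sum_j A j i * expR ((1 - Ax A x j) / mu).
set xi := clamp (-1) 1 (1 - S).
set d := th * xi * q.
have hS : 0 <= S by apply: sumr_ge0 => j _; apply: mulr_ge0; [case/andP: (hA j)|exact: expR_ge0].
have fx : f_mu A eps x = \sum_l x 0 l + mu * \sum_j p j.
  have := g_eq A eps x i 0; rewrite scale0r addr0 => ->.
  by rewrite addr0; congr (_ + _ * _); apply: eq_bigr => j _; rewrite mulr0 subr0.
have fy : f_mu A eps (x - d *: e_vec R i) =
    \sum_l x 0 l - d + mu * \sum_j (p j * expR (A j i * d / mu)).
  rewrite -scaleNr g_eq; congr (_ + _ * _); apply: eq_bigr => j _.
  by rewrite /p -expRD mulrN opprK -mulrDl.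
have hxi1 : `|xi| <= 1.
  rewrite /xi /clamp ler_norml; apply/andP; split.
    by rewrite le_max lexx.
  rewrite ge_max ge_min lexx orTb andbT; lra.
have hM : forall j, A j i * `|d| / mu <= `|xi| / 4.
  move=> j; rewrite ler_pdivrMr // /d !normrM (ger0_norm (_ : 0 <= q)) //.
  rewrite (ger0_norm (_ : 0 <= th)); last by case/andP: hth.
  case/andP: (hA j) => h0 h1; case/andP: hth => t0 t1.
  have hx0 : 0 <= `|xi| := normr_ge0 xi.
  have h2 : A j i * th * q <= c * q.
    apply: ler_wpM2r => //; nra.
  have h3 : A j i * th * q * `|xi| <= c * q * `|xi| by exact: ler_wpM2r.
  have h4 : 4 * (c * q) * `|xi| <= mu * `|xi| by exact: ler_wpM2r.
  nra.
have hsum : forall K, 0 <= K ->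
    (forall j, expR (A j i * d / mu) <= 1 + A j i * d / mu + K * (A j i * d / mu) ^+ 2) ->
    mu * \sum_j (p j * expR (A j i * d / mu)) <= mu * \sum_j p j + S * d + K * `|d| * (`|xi| / 4) * S.
  move=> K hK he.
  rewrite !mulr_sumr /S mulr_suml -!big_split /=; apply: ler_sum => j _.
  have := @term mu (p j) (A j i) d _ K hmu (expR_gt0 _) (proj1 (andP (hA j))) hK (hM j) (he j).
  by move=> h; apply: (le_trans h); rewrite le_eqVlt; apply/orP; left; apply/eqP; rewrite /p; ring.
rewrite fx fy.
have ht0 : 0 <= th by case/andP: hth.
case: (lerP S 1) => hS1.
  have hxi0 : 0 <= xi.
    rewrite /xi /clamp le_max le_min ler01 /=; apply/orP; right; lra.
  have hd0 : 0 <= d by rewrite /d; apply: mulr_ge0 => //; exact: mulr_ge0.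
  have he : forall j, expR (A j i * d / mu) <= 1 + A j i * d / mu + 4/3 * (A j i * d / mu) ^+ 2.
    move=> j; apply: expR_le_pos.
      by apply: divr_ge0; [apply: mulr_ge0 => //; case/andP: (hA j)| exact: ltW].
    apply: (le_trans _ (le_trans (hM j) _)); first by rewrite (ger0_norm hd0).
    lra.
  have h := hsum (4/3) (ltac:(lra)) he.
  have hS01 : 0 <= S <= 1 by apply/andP; split.
  have := sc1 S th q hS01 hth hq.
  rewrite -/xi -/d => h2; lra.
have hxi0 : xi <= 0.
  rewrite /xi /clamp ge_max ge_min; apply/andP; split; [lra| apply/orP; right; lra].
have hd0 : d <= 0 by rewrite /d -mulrA mulrCA; apply: mulr_le0_ge0 => //; exact: mulr_ge0.
have he : forall j, expR (A j i * d / mu) <= 1 + A j i * d / mu + 1 * (A j i * d / mu) ^+ 2.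
  move=> j; apply: expR_le_neg.
  rewrite -mulrA; apply: mulr_ge0_le0; first by case/andP: (hA j).
  by apply: mulr_le0_ge0 => //; rewrite invr_ge0 ltW.
have h := hsum 1 ler01 he.
have := sc2 S th q hS1 hth hq.
rewrite -/xi -/d => h2; lra.
Qed.
Lemma clamp_step (lo hi z dl : R) : lo <= z <= hi ->
  exists2 th, 0 <= th <= 1 & clamp lo hi (z - dl) - z = - (th * dl).
Proof.
move=> /andP[hl hh].
case: (ltrP (z - dl) lo) => h1.
  have hd : 0 < dl by lra.
  exists ((z - lo) / dl).
    apply/andP; split; first by apply: divr_ge0; lra.
    by rewrite ler_pdivrMr // mul1r; lra.
  rewrite /clamp min_r; last by lra.
  rewrite max_l; last by lra.
  by field; rewrite gt_eqF.
case: (ltrP hi (z - dl)) => h2.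
  have hd : dl < 0 by lra.
  exists ((z - hi) / dl).
    have -> : (z - hi) / dl = (hi - z) / (- dl) by field; rewrite lt_eqF.
    apply/andP; split.
      by apply: divr_ge0; lra.
    rewrite ler_pdivrMr ?oppr_gt0 // mul1r; lra.
  rewrite /clamp min_l; last by lra.
  rewrite max_r; last by lra.
  by field; rewrite lt_eqF.
exists 1; first by rewrite ler01 lexx.
by rewrite /clamp min_r // max_r //; ring.
Qed.
Lemma colmax_ge A l j : A j l <= colmax A l.
Proof. rewrite /colmax. exact: (le_bigmax 0 (fun j0 => A j0 l) j). Qed.
Lemma colmax_gt0 A l : (forall j i, 0 <= A j i) -> (exists j, A j l != 0) -> 0 < colmax A l.
Proof.
move=> hA [j hj]; apply: (lt_le_trans _ (colmax_ge A l j)).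
by rewrite lt_neqAle eq_sym hj hA.
Qed.
Lemma state_inv A eps xs s k : (forall l, 0 < colmax A l) -> in_Delta A xs ->
  forall l, 0 <= (state A eps xs s k).2 0 l <= 3 / colmax A l.
Proof.
move=> hc hxs; elim: k => [|k IH] l /=; first exact: hxs.
rewrite mxE; case: eqP => [->|_]; last exact: IH.
have h3 : 0 <= 3 / colmax A (s k.+1) by apply: divr_ge0 => //; exact: ltW.
rewrite /clamp; apply/andP; split.
  by rewrite le_max lexx.
by rewrite ge_max h3 ge_min lexx.
Qed.
Lemma step_ok A eps k (yz : 'rV[R]_n * 'rV[R]_n) i :
  0 < mu_of m n eps -> (forall j, 0 <= A j i) -> 0 < colmax A i ->
  0 <= yz.2 0 i <= 3 / colmax A i ->
  f_mu A eps (step A eps k yz i).1.1 - f_mu A eps (step A eps k yz i).1.2 >=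
    (1 / 2) * inner (grad (f_mu A eps) (step A eps k yz i).1.1)
       ((step A eps k yz i).1.1 - (step A eps k yz i).1.2).
Proof.
move=> hmu hA hc hz.
rewrite /step /=.
set X := (_ *: yz.2 + _ *: yz.1).
set a := partial (f_mu A eps) i X.
set xi := clamp (-1) 1 a.
set na := n%:R * alpha_of m n eps k.
set c := colmax A i.
set L := L_of m n eps.
have [th hth hcl] := clamp_step 0 (3 / c) (yz.2 0 i) (na * xi / c) hz.
set q := 1 / (na * L) * na / c.
have eY : X + (1 / (na * L)) *: (\row_l (if l == i then clamp 0 (3 / c) (yz.2 0 i - na * xi / c)
      else yz.2 0 l) - yz.2) = X - (th * xi * q) *: e_vec R i.
  apply/rowP => l; rewrite /e_vec !mxE; case: eqP => [->|hl].
    by rewrite hcl /q; ring.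
  by rewrite subrr mulr0 mulr0 oppr0.
rewrite eY.
have ei : inner (grad (f_mu A eps) X) (X - (X - (th * xi * q) *: e_vec R i)) = a * (th * xi * q).
  rewrite /inner (bigD1 i) //= big1 => [|l hl].
    by rewrite /grad /e_vec !mxE eqxx -/a; ring.
  by rewrite /e_vec !mxE (negbTE hl); ring.
rewrite ei.
have hA' : forall j, 0 <= A j i <= c by move=> j; rewrite hA colmax_ge.
have hL : 0 < L by rewrite /L /L_of divr_gt0.
have [hq hcq] : 0 <= q /\ 4 * (c * q) <= mu_of m n eps.
  case: (eqVneq na 0) => hna.
    by rewrite /q hna !(mulr0, mul0r); split => //; exact: ltW.
  have -> : q = 1 / (L * c) by rewrite /q; field; rewrite hna gt_eqF // gt_eqF.
  split; first by rewrite divr_ge0 // mulr_ge0 // ltW.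
  rewrite le_eqVlt; apply/orP; left; apply/eqP; rewrite /L /L_of; field.
  by rewrite gt_eqF // gt_eqF.
have := key A eps X i c th q hmu hc hA' hth hq hcq. rewrite -/a -/xi. by [].
Qed.
End S.

Theorem lemma9 (R : realType) (m n : nat) (A : 'M[R]_(m, n)) (eps : R)
    (xs : 'rV[R]_n)
    (hA : forall j i, 0 <= A j i)
    (hcol : forall i : 'I_n, exists j : 'I_m, A j i != 0)
    (heps : 0 < eps < 1)
    (hxs : in_Delta A xs)
    (k : nat) (hk1 : (1 <= k)%N) (hkT : (k%:Z <= @T_of R m n eps)%R)
    (s : nat -> 'I_n) (i : 'I_n) :
  let yz := state A eps xs s k.-1 in
  let r := step A eps k yz i in
  let x := r.1.1 in
  let y := r.1.2 in
  f_mu A eps x - f_mu A eps y >=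
    (1 / 2) * inner (grad (f_mu A eps) x) (x - y).
Proof.

have n0 : (0 < n)%N := leq_ltn_trans (leq0n _) (ltn_ord i).
have m0 : (0 < m)%N by case: (hcol i) => j _; exact: (leq_ltn_trans (leq0n _) (ltn_ord j)).
have hc : forall l, 0 < colmax A l := fun l => colmax_gt0 _ _ _ A l hA (hcol l).
have hmu : 0 < mu_of m n eps.
  rewrite /mu_of; case/andP: heps => e0 e1; apply: divr_gt0 => //; apply: mulr_gt0 => //.
  apply: ln_gt0; rewrite ltr_pdivlMr // mul1r; apply: (lt_le_trans e1).
  by rewrite ler1n muln_gt0 n0 m0.
have hz := state_inv _ _ _ A eps xs s k.-1 hc hxs i.
exact: (step_ok _ _ _ A eps k (state A eps xs s k.-1) i hmu (fun j => hA j i) (hc i) hz).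
Qed.
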